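(* Let $n=p_1^{m_1}\cdots p_k^{m_k}$. The essential ideal graph $\mathcal E_{\mathbb Z_n}$ is Laplacian integral if and only if all eigenvalues of $\mathbf L(\mathscr G)$ are integers.
   Context: Primes $p_1<\dots<p_k$, positive integers $m_i$, $n$ not prime. Nonzero proper ideals of $\mathbb Z_n$ are uniquely $\langle p_1^{r_1}\cdots p_k^{r_k}\rangle$, $0\le r_i\le m_i$, $(r_i)\ne(0,\dots,0),(m_1,\dots,m_k)$; essential iff $r_j\ne m_j$ for all $j$. Essential ideal graph $\mathcal E_{\mathbb Z_n}$: vertices nonzero proper ideals, distinct $I,K$ adjacent iff $I+K$ essential. A graph is Laplacian integral if all eigenvalues of its Laplacian $D-A$ are integers. $\mathscr G$: vertex set the $2^k-2$ ideals $\langle\prod_{i\in S}p_i^{m_i}\rangle$, $S$ nonempty proper subset of $\{1,\dots,k\}$ (write $\Xi_I=S$), $I\sim J$ iff $\Xi_I\cap\Xi_J=\emptyset$. $n_I=\prod_{i\notin\Xi_I}m_i$, $N_I=\sum_{J\sim I}n_J$. $\mathbf L(\mathscr G)$: matrix indexed by $V(\mathscr G)$ with diagonal entries $N_I$, $(I,J)$-entry $-n_J$ if $I\ne J$, $I\sim J$, and $0$ otherwise. *)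

(* Defs.v *)
From HB Require Import structures.
From mathcomp Require Import all_boot all_order all_algebra all_field.
Set Implicit Arguments. Unset Strict Implicit. Unset Printing Implicit Defensive.
Import Order.TTheory GRing.Theory Num.Theory.
Local Open Scope ring_scope.

(* ---------- Ideals of the ring 'Z_n (meaningful for 1 < n) ---------- *)
Definition is_ideal (n : nat) (I : {set 'Z_n}) : bool :=
  [&& (0 : 'Z_n) \in I,
      [forall x in I, forall y in I, x - y \in I] &
      [forall a : 'Z_n, forall x in I, a * x \in I]].

Definition ideal_sum (n : nat) (I K : {set 'Z_n}) : {set 'Z_n} :=
  [set x + y | x in I, y in K].

Definition is_essential (n : nat) (I : {set 'Z_n}) : bool :=
  is_ideal I &&
  [forall J : {set 'Z_n}, (is_ideal J && (J != [set 0])) ==> (I :&: J != [set 0])].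

Definition EVert (n : nat) : predArgType :=
  {I : {set 'Z_n} | [&& is_ideal I, I != [set 0] & I != [set: 'Z_n]]}.

Definition essential_adj (n : nat) : rel (EVert n) :=
  fun I K => (I != K) && is_essential (ideal_sum (val I) (val K)).

Definition laplacian_mx (V : finType) (adj : rel V) : 'M[algC]_#|V| :=
  \matrix_(i, j)
    (let x := enum_val i in let y := enum_val j in
     if x == y then (#|[set z | adj x z]|)%:R
     else if adj x y then -1 else 0).

Definition laplacian_integral (V : finType) (adj : rel V) : Prop :=
  forall a : algC, eigenvalue (laplacian_mx adj) a -> a \in Num.int.

(* vertex of G with Xi = S, S nonempty proper subset of {1..k} *)
Definition GVert (k : nat) : predArgType :=
  {S : {set 'I_k} | (S != set0) && (S != [set: 'I_k])}.

Definition G_adj (k : nat) : rel (GVert k) :=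
  fun S T => val S :&: val T == set0.

Definition nG (k : nat) (m : 'I_k -> nat) (S : GVert k) : nat :=
  (\prod_(i in ~: val S) m i)%N.

Definition NG (k : nat) (m : 'I_k -> nat) (S : GVert k) : nat :=
  (\sum_(T : GVert k | G_adj S T) nG m T)%N.

Definition LG_mx (k : nat) (m : 'I_k -> nat) : 'M[algC]_#|GVert k| :=
  \matrix_(i, j)
    (let S := enum_val i in let T := enum_val j in
     if S == T then (NG m S)%:R
     else if G_adj S T then - (nG m T)%:R else 0).

(* Main.v *)
Require Import Defs.
From HB Require Import structures.
From mathcomp Require Import all_boot all_order all_algebra all_field.
From mathcomp Require Import ring.
Import Order.TTheory GRing.Theory Num.Theory.
Local Open Scope ring_scope.
Set Implicit Arguments. Unset Strict Implicit. Unset Printing Implicit Defensive.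

Lemma sum_enum (T : finType) (G : T -> algC) :
  \sum_x G x = \sum_(i < #|T|) G (enum_val i).
Proof. by rewrite (big_enum_val (A := T)). Qed.

Lemma eigen_fun (T : finType) (F : T -> T -> algC) (a : algC) (M : 'M[algC]_#|T|) :
  M = \matrix_(i, j) F (enum_val i) (enum_val j) ->
  eigenvalue M a <->
  exists2 W : T -> algC, (forall y, \sum_x W x * F x y = a * W y) & exists x, W x != 0.
Proof.
move=> ->; split.
  move/eigenvalueP=> [v hv vn0].
  exists (fun x => v 0 (enum_rank x)).
    move=> y; move/rowP: hv => /(_ (enum_rank y)).
    rewrite !mxE => <-; rewrite sum_enum; apply: eq_bigr => i _.
    by rewrite !mxE enum_valK enum_rankK.
  move/eqP: vn0 => vn0.
  have [x hx]: exists x, v 0 x != 0.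
    apply/existsP; apply: contraT; rewrite negb_exists => /forallP h.
    case: vn0; apply/rowP => j; rewrite mxE; apply/eqP; by move: (h j); rewrite negbK.
  by exists (enum_val x); rewrite enum_valK.
move=> [W hW [x hx]]; apply/eigenvalueP.
exists (\row_i W (enum_val i)).
  apply/rowP => j; rewrite !mxE -hW [RHS]sum_enum; apply: eq_bigr => i _.
  by rewrite !mxE.
apply/eqP => /rowP /(_ (enum_rank x)); rewrite !mxE enum_rankK => h.
by rewrite h eqxx in hx.
Qed.

Section Spectral.
Variables (k : nat) (m : 'I_k -> nat) (V : finType) (tau : V -> {set 'I_k}).
Hypothesis htauT : forall x, tau x != setT.
Hypothesis hfib : forall S : GVert k, #|[set x | tau x == val S]| = nG m S.
Hypothesis hm : forall i, (0 < m i)%N.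

Definition adjV : rel V := fun x y => (x != y) && (tau x :&: tau y == set0).
Let E0 := [set x | tau x == set0].
Let fib (S : GVert k) := [set x | tau x == val S].
Let t : algC := (#|E0|)%:R.

Lemma GV_ne0 (S : GVert k) : val S != set0.
Proof. by case: S => S /= /andP[]. Qed.

Lemma G_adj_sym (S T : GVert k) : G_adj S T = G_adj T S.
Proof. by rewrite /G_adj setIC. Qed.

Lemma G_adj_irr (S : GVert k) : G_adj S S = false.
Proof. by rewrite /G_adj setIid; apply/negbTE/GV_ne0. Qed.

Lemma exGV x : tau x != set0 -> {T : GVert k | tau x = val T}.
Proof.
move=> h; have h' : (tau x != set0) && (tau x != setT) by rewrite h htauT.
by exists (exist _ (tau x) h').
Qed.

Lemma sum_uniq0 x (H : GVert k -> algC) : tau x == set0 -> \sum_(S | tau x == val S) H S = 0.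
Proof.
move=> /eqP h; rewrite big_pred0 // => S; rewrite h eq_sym; apply/negbTE/GV_ne0.
Qed.

Lemma sum_uniq1 x T (H : GVert k -> algC) : tau x = val T -> \sum_(S | tau x == val S) H S = H T.
Proof.
move=> h; rewrite (bigD1 T) /= ?h ?eqxx // big1 ?addr0 // => S /andP[/eqP e ne].
by move: ne; rewrite (val_inj e) eqxx.
Qed.

Lemma partition (F : V -> algC) :
  \sum_x F x = \sum_(x in E0) F x + \sum_S \sum_(x in fib S) F x.
Proof.
rewrite (eq_bigr (fun S => \sum_x (if tau x == val S then F x else 0))); last first.
  by move=> S _; rewrite big_mkcond; apply: eq_bigr => x _; rewrite inE.
rewrite exchange_big [X in _ = X + _]big_mkcond -big_split /=.
apply: eq_bigr => x _; rewrite -big_mkcond inE.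
case: (boolP (tau x == set0)) => h.
  by rewrite sum_uniq0 // addr0.
by have [T hT] := exGV h; rewrite (sum_uniq1 _ hT) add0r.
Qed.

Lemma adjV_sym x y : adjV x y = adjV y x.
Proof. by rewrite /adjV eq_sym setIC. Qed.

Lemma sum_adj0 y (G : V -> algC) : tau y == set0 ->
  \sum_(x | adjV x y) G x = \sum_x G x - G y.
Proof.
move=> /eqP h; rewrite [X in _ = X - _](bigD1 y) //= addrC addrK.
by apply: eq_bigl => x; rewrite /adjV h setI0 eqxx andbT.
Qed.

Lemma sum_adjT y T (G : V -> algC) : tau y = val T ->
  \sum_(x | adjV x y) G x =
  \sum_(x in E0) G x + \sum_(S | G_adj S T) \sum_(x in fib S) G x.
Proof.
move=> hT; rewrite (eq_bigl (fun x => tau x :&: val T == set0)); last first.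
  move=> x; rewrite /adjV hT; case: (eqVneq x y) => [->|_] //=.
  by rewrite hT setIid; apply/esym/negbTE/GV_ne0.
rewrite big_mkcond partition; congr (_ + _).
  by apply: eq_bigr => x; rewrite inE => /eqP ->; rewrite set0I eqxx.
rewrite [RHS]big_mkcond; apply: eq_bigr => S _; case: ifP => hST.
  by apply: eq_bigr => x; rewrite inE => /eqP ->; move: hST; rewrite /G_adj => ->.
by apply: big1 => x; rewrite inE => /eqP ->; move: hST; rewrite /G_adj => ->.
Qed.

Lemma nG_gt0 (S : GVert k) : (0 < nG m S)%N.
Proof. by rewrite /nG prodn_gt0. Qed.

Lemma nG_neq0 (S : GVert k) : (nG m S)%:R != 0 :> algC.
Proof. by rewrite pnatr_eq0 -lt0n nG_gt0. Qed.

Lemma sum_fib_const S (c : algC) : \sum_(x in fib S) c = (nG m S)%:R * c.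
Proof. by rewrite sumr_const hfib mulr_natl. Qed.

Definition Lapf (x y : V) : algC :=
  if x == y then (#|[set z | adjV x z]|)%:R else if adjV x y then -1 else 0.

Definition deg (y : V) : algC := (#|[set z | adjV y z]|)%:R.

Lemma lap_col (W : V -> algC) y :
  \sum_x W x * Lapf x y = W y * deg y - \sum_(x | adjV x y) W x.
Proof.
rewrite (bigD1 y) //= /Lapf eqxx; congr (_ + _).
rewrite -sumrN big_mkcond [RHS]big_mkcond; apply: eq_bigr => x _.
case: (eqVneq x y) => [->|ne] /=; first by rewrite /adjV eqxx.
by case: (adjV x y); rewrite ?mulrN1 ?mulr0 ?oppr0.
Qed.

Lemma deg_sum y : deg y = \sum_(x | adjV x y) 1.
Proof.
rewrite /deg -sum1_card natr_sum; apply: eq_big => [x|x _]; last by [].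
by rewrite inE adjV_sym.
Qed.

Lemma deg_fib y T : tau y = val T -> deg y = t + (NG m T)%:R.
Proof.
move=> hT; rewrite deg_sum (sum_adjT _ hT) sumr_const /t; congr (_ + _).
rewrite /NG natr_sum; apply: eq_big => [S|S _]; first by rewrite G_adj_sym.
by rewrite sum_fib_const mulr1.
Qed.

Definition LGf (S T : GVert k) : algC :=
  if S == T then (NG m S)%:R else if G_adj S T then - (nG m T)%:R else 0.

Lemma lg_col (U : GVert k -> algC) T :
  \sum_S U S * LGf S T = (NG m T)%:R * U T - (nG m T)%:R * \sum_(S | G_adj S T) U S.
Proof.
rewrite (bigD1 T) //= /LGf eqxx mulrC; congr (_ + _).
rewrite mulr_sumr -sumrN big_mkcond [RHS]big_mkcond; apply: eq_bigr => S _.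
case: (eqVneq S T) => [->|ne] /=; first by rewrite G_adj_irr.
by case: (G_adj S T); rewrite ?mulrN ?mulr0 ?oppr0 // mulrC.
Qed.

Lemma lg_row (S : GVert k) : \sum_T LGf S T = 0.
Proof.
rewrite (bigD1 S) //= /LGf eqxx /NG natr_sum.
apply/eqP; rewrite addr_eq0 -sumrN; apply/eqP.
rewrite big_mkcond [RHS]big_mkcond; apply: eq_bigr => T _ /=.
case: (eqVneq T S) => [->|ne] /=; first by rewrite G_adj_irr.
by case: (G_adj S T); rewrite ?opprK ?oppr0.
Qed.

Lemma eLap : laplacian_mx adjV = \matrix_(i, j) Lapf (enum_val i) (enum_val j).
Proof. by []. Qed.
Lemma eLG : LG_mx m = \matrix_(i, j) LGf (enum_val i) (enum_val j).
Proof. by []. Qed.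

Definition Wof (U : GVert k -> algC) (x : V) : algC :=
  \sum_(S | tau x == val S) U S / (nG m S)%:R.

Lemma sumW_fib U S : \sum_(x in fib S) Wof U x = U S.
Proof.
rewrite (eq_bigr (fun _ => U S / (nG m S)%:R)); last first.
  by move=> x; rewrite inE => /eqP h; rewrite /Wof (sum_uniq1 _ h).
by rewrite sum_fib_const mulrC divfK // nG_neq0.
Qed.

Lemma sumW_E0 U : \sum_(x in E0) Wof U x = 0.
Proof. by apply: big1 => x; rewrite inE => h; rewrite /Wof sum_uniq0. Qed.

Lemma spec_dir1 :
  laplacian_integral adjV -> forall a, eigenvalue (LG_mx m) a -> a \in Num.int.
Proof.
move=> hL mu /(eigen_fun _ eLG) [U hU [S0 hS0]].
case: (eqVneq mu 0) => [-> | mu0]; first by rewrite rpred0.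
have sU : \sum_S U S = 0.
  have : mu * \sum_T U T = 0.
    rewrite mulr_sumr; under eq_bigr => T _ do rewrite -hU.
    rewrite exchange_big big1 // => S _; by rewrite -mulr_sumr lg_row mulr0.
  by move/eqP; rewrite mulf_eq0 (negbTE mu0) => /eqP.
have hW : eigenvalue (laplacian_mx adjV) (mu + t).
  apply/(eigen_fun _ eLap); exists (Wof U).
    move=> y; rewrite lap_col.
    case: (boolP (tau y == set0)) => hy.
      rewrite sum_adj0 // /Wof (sum_uniq0 _ hy) mul0r mulr0 subr0 sub0r.
      rewrite partition sumW_E0 add0r.
      by under eq_bigr => S _ do rewrite sumW_fib; rewrite sU oppr0.
    have [T hT] := exGV hy.
    rewrite (sum_adjT _ hT) (deg_fib hT) sumW_E0 add0r.
    under eq_bigr => S _ do rewrite sumW_fib.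
    rewrite /Wof (sum_uniq1 _ hT).
    have := hU T; rewrite lg_col => e.
    have nz := nG_neq0 T.
    have -> : \sum_(S | G_adj S T) U S = ((NG m T)%:R * U T - mu * U T) / (nG m T)%:R.
      by rewrite -e; field.
    by field.
  have : (0 < #|fib S0|)%N by rewrite hfib nG_gt0.
  case/card_gt0P => x hx; exists x.
  by move: hx; rewrite inE => /eqP h; rewrite /Wof (sum_uniq1 _ h) mulf_neq0 // invr_eq0 nG_neq0.
have := hL _ hW => h.
by rewrite -(addrK t mu) rpredB // natr_int.
Qed.

Lemma deg_int y : deg y \in Num.int.
Proof. by rewrite /deg natr_int. Qed.

Lemma spec_dir2 :
  (forall a, eigenvalue (LG_mx m) a -> a \in Num.int) -> laplacian_integral adjV.
Proof.
move=> hG la /(eigen_fun _ eLap) [W hW [x0 hx0]].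
have hW' y : W y * deg y - \sum_(x | adjV x y) W x = la * W y by rewrite -lap_col.
pose vN := \sum_(x in E0) W x.
pose v := fun S => \sum_(x in fib S) W x.
have eqT T : (t + (NG m T)%:R) * v T
    - (nG m T)%:R * (vN + \sum_(S | G_adj S T) v S) = la * v T.
  rewrite /v !mulr_sumr -sum_fib_const -sumrB; apply: eq_bigr => y.
  rewrite inE => /eqP hT; rewrite -hW' (deg_fib hT) (sum_adjT _ hT).
  by rewrite mulrC.
case: (eqVneq vN 0) => [vN0 | vNn0].
  case: (pickP (fun S => v S != 0)) => [S0 hS0 | hall].
    have : la - t \in Num.int.
      apply: hG; apply/(eigen_fun _ eLG); exists v; last by exists S0.
      move=> T; rewrite lg_col; have := eqT T; rewrite vN0 add0r => e.
      by rewrite mulrBl -e; ring.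
    by move=> h; rewrite -(subrK t la) rpredD // natr_int.
  have vall S : v S = 0 by apply/eqP; move: (hall S) => /= /negbFE.
  case: (boolP (tau x0 == set0)) => h.
    have := hW' x0; rewrite sum_adj0 // partition -/vN vN0 add0r.
    rewrite big1 ?sub0r ?opprK; last by move=> S _; exact: vall.
    move=> e; have : la = deg x0 + 1.
      by apply: (mulIf hx0); rewrite -e; ring.
    by move=> ->; rewrite rpredD ?deg_int ?rpred1.
  have [T hT] := exGV h.
  have := hW' x0; rewrite (sum_adjT _ hT) -/vN vN0 add0r.
  rewrite big1 ?subr0; last by move=> S _; exact: vall.
  move=> e; have : la = deg x0 by apply: (mulIf hx0); rewrite -e mulrC.
  by move=> ->; rewrite deg_int.
pose z := \sum_S v S.
pose s : algC := \sum_S (nG m S)%:R.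
have eq0 : la * vN = s * vN - t * z.
  rewrite /vN mulr_sumr.
  have Nv : \sum_(x : V) (1 : algC) = t + s.
    by rewrite partition sumr_const; congr (_ + _); apply: eq_bigr => S _; rewrite sum_fib_const mulr1.
  have Zv : \sum_x W x = vN + z by rewrite partition.
  rewrite (eq_bigr (fun y => W y * (t + s) - (vN + z))); last first.
    move=> y; rewrite inE => h; rewrite -hW' sum_adj0 // deg_sum sum_adj0 // Nv Zv.
    by ring.
  rewrite sumrB -mulr_suml sumr_const -/vN.
  rewrite -[X in _ - X]mulr_natl -/t; ring.
have X : \sum_T (nG m T)%:R * \sum_(S | G_adj S T) v S = \sum_S (NG m S)%:R * v S.
  under eq_bigr => T _ do rewrite mulr_sumr.
  rewrite (exchange_big_dep predT) //=; apply: eq_bigr => S _.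
  by rewrite /NG natr_sum mulr_suml; apply: eq_bigr.
have eqZ : la * z = t * z - s * vN.
  rewrite /z mulr_sumr; under eq_bigr => T _ do rewrite -eqT.
  rewrite (eq_bigr (fun T => (t * v T - (nG m T)%:R * vN) + ((NG m T)%:R * v T - (nG m T)%:R * \sum_(S | G_adj S T) v S))); last by move=> T _; ring.
  by rewrite big_split /= !sumrB -mulr_sumr -mulr_suml -/z -/s X subrr addr0.
have hsum : la * (vN + z) = 0 by rewrite mulrDr eq0 eqZ; ring.
case: (eqVneq la 0) => [-> | la0]; first by rewrite rpred0.
have hz : z = - vN.
  by apply/eqP; rewrite -addr_eq0 addrC; move/eqP: hsum; rewrite mulf_eq0 (negbTE la0).
have : la = s + t.
  by apply: (mulIf vNn0); rewrite eq0 hz; ring.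
move=> ->; rewrite rpredD ?natr_int // /s -natr_sum natr_int //.
Qed.

Lemma spectral :
  laplacian_integral adjV <-> forall a, eigenvalue (LG_mx m) a -> a \in Num.int.
Proof. by split; [exact: spec_dir1 | exact: spec_dir2]. Qed.

End Spectral.

Lemma dvdn_modr' d n a : (d %| n)%N -> (d %| a %% n)%N = (d %| a)%N.
Proof. by move=> h; rewrite [in RHS](divn_eq a n) dvdn_addr // dvdn_mull. Qed.

Section Zn.
Variable n : nat.
Hypothesis hn1 : (1 < n)%N.

Lemma valN (a : nat) : val (a%:R : 'Z_n) = (a %% n)%N.
Proof. exact: val_Zp_nat. Qed.

Lemma ZpE (x : 'Z_n) : x = (val x)%:R.
Proof. by rewrite natr_Zp. Qed.

Lemma vlt (x : 'Z_n) : (val x < n)%N.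
Proof. by rewrite -[X in (_ < X)%N](Zp_cast hn1) ltn_ord. Qed.

Lemma natn0 : (n%:R : 'Z_n) = 0.
Proof. by apply: val_inj; rewrite valN modnn. Qed.

Lemma Zp_eq0 (x : 'Z_n) : (x == 0) = (val x == 0%N).
Proof. by rewrite -val_eqE. Qed.

Definition M (d : nat) : {set 'Z_n} := [set x : 'Z_n | (d %| val x)%N].

Lemma memM d a : (d %| n)%N -> ((a%:R : 'Z_n) \in M d) = (d %| a)%N.
Proof. by move=> h; rewrite inE valN dvdn_modr'. Qed.

Lemma memM' d (x : 'Z_n) : (x \in M d) = (d %| val x)%N.
Proof. by rewrite inE. Qed.

Lemma idl0 (I : {set 'Z_n}) : is_ideal I -> (0 : 'Z_n) \in I.
Proof. by case/and3P. Qed.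

Lemma idlB (I : {set 'Z_n}) (x y : 'Z_n) : is_ideal I -> x \in I -> y \in I -> x - y \in I.
Proof. by case/and3P => _ /forall_inP h _ xI yI; move/forall_inP: (h x xI); apply. Qed.

Lemma idlM (I : {set 'Z_n}) (a x : 'Z_n) : is_ideal I -> x \in I -> a * x \in I.
Proof. by case/and3P => _ _ /forallP /(_ a) /forall_inP; apply. Qed.

Lemma subZ (a b : nat) : (b <= a)%N -> (a%:R : 'Z_n) - b%:R = (a - b)%:R.
Proof. by move=> h; rewrite natrB. Qed.

Lemma ideal_M d : (d %| n)%N -> is_ideal (M d).
Proof.
move=> hd; apply/and3P; split.
- by rewrite memM' dvdn0.
- apply/forall_inP => x hx; apply/forall_inP => y hy.
  rewrite (ZpE x) (ZpE y).
  have -> : ((val x)%:R : 'Z_n) - (val y)%:R = (val x + (n - val y))%:R.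
    by rewrite natrD natrB ?natn0 ?sub0r // ltnW // vlt.
  rewrite memM // dvdn_add -?memM' //; apply: dvdn_sub => //; by rewrite -memM'.
- apply/forallP => a; apply/forall_inP => x hx.
  rewrite (ZpE a) (ZpE x) -natrM memM //; apply: dvdn_mull; by rewrite -memM'.
Qed.

Lemma M_n : M n = [set 0].
Proof.
apply/setP => x; rewrite memM' inE Zp_eq0.
apply/idP/idP => [h|/eqP ->]; last by rewrite dvdn0.
have := vlt x; move: h; case: (val x) => // v h.
by have := dvdn_leq (ltn0Sn v) h; rewrite leqNgt => /negbTE ->.
Qed.

Definition gen (I : {set 'Z_n}) : nat := foldr gcdn n (map val (enum I)).

Lemma gen_dvd_n (I : {set 'Z_n}) : (gen I %| n)%N.
Proof.
rewrite /gen; elim: (enum I) => [|x s IH] /=; first by [].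
exact: dvdn_trans (dvdn_gcdr _ _) IH.
Qed.

Lemma gen_dvd (I : {set 'Z_n}) x : x \in I -> (gen I %| val x)%N.
Proof.
rewrite /gen -mem_enum; elim: (enum I) => [|y s IH] //=.
rewrite inE => /orP[/eqP ->|h]; first exact: dvdn_gcdl.
exact: dvdn_trans (dvdn_gcdr _ _) (IH h).
Qed.

Lemma bez (I : {set 'Z_n}) (a b : nat) : is_ideal I -> (a%:R : 'Z_n) \in I -> (b%:R : 'Z_n) \in I ->
  ((gcdn a b)%:R : 'Z_n) \in I.
Proof.
move=> hI ha hb; case: (posnP a) => [a0|apos]; first by rewrite a0 gcd0n.
case: (egcdnP b apos) => km kn e _.
have -> : gcdn a b = (km * a - kn * b)%N by rewrite e addKn.
rewrite natrB; last by rewrite e leq_addr.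
by rewrite !natrM; apply: idlB => //; apply: idlM.
Qed.

Lemma gen_in (I : {set 'Z_n}) : is_ideal I -> ((gen I)%:R : 'Z_n) \in I.
Proof.
move=> hI; rewrite /gen.
have : forall x, x \in enum I -> x \in I by move=> x; rewrite mem_enum.
elim: (enum I) => [|y s IH] /= h; first by rewrite natn0 idl0.
apply: bez => //; last by apply: IH => x hx; apply: h; rewrite inE hx orbT.
by rewrite -ZpE; apply: h; rewrite inE eqxx.
Qed.

Lemma ideal_gen (I : {set 'Z_n}) : is_ideal I -> I = M (gen I).
Proof.
move=> hI; apply/setP => x; rewrite memM'; apply/idP/idP; first exact: gen_dvd.
case/dvdnP => c hc; rewrite (ZpE x) hc natrM; apply: idlM => //; exact: gen_in.
Qed.

Lemma M_inj d d' : (d %| n)%N -> (d' %| n)%N -> M d = M d' -> d = d'.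
Proof.
move=> hd hd' e; apply/eqP; rewrite eqn_dvd.
have h1 : ((d%:R : 'Z_n) \in M d) by rewrite memM.
have h2 : ((d'%:R : 'Z_n) \in M d') by rewrite memM.
apply/andP; split; first by rewrite -(memM _ hd) e. by rewrite -(memM _ hd') -e.
Qed.

Lemma sum_M d d' : (d %| n)%N -> (d' %| n)%N -> ideal_sum (M d) (M d') = M (gcdn d d').
Proof.
move=> hd hd'; have hg : (gcdn d d' %| n)%N by apply: dvdn_trans (dvdn_gcdl _ _) hd.
apply/setP => z; apply/imset2P/idP.
  case=> x y hx hy ->; rewrite (ZpE x) (ZpE y) -natrD memM // dvdn_add //.
    by apply: dvdn_trans (dvdn_gcdl _ _) _; rewrite -memM'.
  by apply: dvdn_trans (dvdn_gcdr _ _) _; rewrite -memM'.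
rewrite memM' => /dvdnP [c hc].
have dpos : (0 < d)%N by apply: dvdn_gt0 hd; apply: ltnW.
case: (egcdnP d' dpos) => km kn e _.
exists ((c * km * d)%:R) (0 - (c * kn * d')%:R).
- by rewrite memM // dvdn_mull.
- by apply: idlB; [exact: ideal_M | rewrite memM' dvdn0 | rewrite memM // dvdn_mull].
rewrite sub0r (ZpE z) hc.
have -> : (c * km * d = c * kn * d' + c * gcdn d d')%N by rewrite -!mulnA e mulnDr.
by rewrite natrD addrC addKr mulnC.
Qed.

End Zn.

Lemma card_ltord N c : (c <= N)%N -> #|[pred x : 'I_N | ((x : nat) < c)%N]| = c.
Proof.
move=> h; have winj : injective (widen_ord h) by move=> a b e; apply: val_inj; exact: (congr1 val e).
rewrite -[RHS](card_ord c) -(card_imset _ winj).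
apply: eq_card => x; rewrite inE; apply/idP/imsetP.
  by move=> hx; exists (Ordinal hx) => //; apply: val_inj.
by case=> y _ ->; rewrite /= ltn_ord.
Qed.

Lemma card_eqord N c : (c < N)%N -> #|[pred x : 'I_N | (x : nat) == c]| = 1%N.
Proof.
move=> h; apply: (@eq_card1 _ (Ordinal h)) => x; rewrite inE.
by apply/eqP/eqP => [e|->] //; apply: val_inj.
Qed.

Lemma foldr_prod (T : Type) (f : T -> nat) s : foldr muln 1%N (map f s) = (\prod_(x <- s) f x)%N.
Proof. by elim: s => [|x s IH] /=; rewrite ?big_nil ?big_cons ?IH. Qed.

Section Main.
Variables (k : nat) (p m : 'I_k -> nat) (n : nat).
Hypothesis hp : forall i, prime (p i).
Hypothesis pinj : injective p.
Hypothesis hm : forall i, (0 < m i)%N.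
Hypothesis hn : n = (\prod_(i < k) p i ^ m i)%N.
Hypothesis hn1 : (1 < n)%N.

Lemma npos : (0 < n)%N.
Proof. exact: ltnW. Qed.

Lemma logn_prodp q (r : 'I_k -> nat) :
  logn q (\prod_(i < k) p i ^ r i) = (\sum_(i < k) (if q == p i then r i else 0))%N.
Proof.
have : (0 < \prod_(i < k) p i ^ r i)%N /\
  logn q (\prod_(i < k) p i ^ r i) = (\sum_(i < k) (if q == p i then r i else 0))%N.
  apply: (big_ind2 (fun a b => (0 < a)%N /\ logn q a = b)).
  - by rewrite logn1.
  - move=> a1 b1 a2 b2 [h1 e1] [h2 e2]; split; first by rewrite muln_gt0 h1.
    by rewrite lognM // e1 e2.
  - move=> i _; rewrite expn_gt0 prime_gt0 //; split=> //.
    by rewrite lognX logn_prime //; case: (q == p i); rewrite ?muln1 ?muln0.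
by case.
Qed.

Lemma logn_pj j (r : 'I_k -> nat) : logn (p j) (\prod_(i < k) p i ^ r i) = r j.
Proof.
rewrite logn_prodp (bigD1 j) //= eqxx big1 ?addn0 // => i ne.
by case: eqP => // /pinj e; move: ne; rewrite e eqxx.
Qed.

Lemma logn_out q (r : 'I_k -> nat) : (forall i, q != p i) -> logn q (\prod_(i < k) p i ^ r i) = 0%N.
Proof. by move=> h; rewrite logn_prodp big1 // => i _; rewrite (negbTE (h i)). Qed.

Lemma logn_n j : logn (p j) n = m j.
Proof. by rewrite hn logn_pj. Qed.

Lemma pm_dvd i : (p i ^ m i %| n)%N.
Proof. by rewrite hn (bigD1 i) //= dvdn_mulr. Qed.

Lemma p_dvd i : (p i %| n)%N.
Proof. by apply: dvdn_trans (pm_dvd i); apply: dvdn_exp. Qed.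

Lemma eq_div_log d d' : (d %| n)%N -> (d' %| n)%N ->
  (forall j, logn (p j) d = logn (p j) d') -> d = d'.
Proof.
move=> hd hd' h; apply: eqn_from_log; [exact: dvdn_gt0 npos hd|exact: dvdn_gt0 npos hd'|].
move=> q; case: (boolP [exists j, q == p j]) => [/existsP [j /eqP ->]|hq]; first exact: h.
have hq' : forall i, q != p i by move=> i; apply: contra hq => e; apply/existsP; exists i.
have l0 : logn q n = 0%N by rewrite hn logn_out.
have := dvdn_leq_log q npos hd; have := dvdn_leq_log q npos hd'.
by rewrite l0 !leqn0 => /eqP -> /eqP ->.
Qed.

Lemma allpm_n d : (d %| n)%N -> (forall i, p i ^ m i %| d)%N -> d = n.
Proof.
move=> hd h; apply: eq_div_log => // j; apply/eqP; rewrite eqn_leq.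
rewrite (dvdn_leq_log _ npos hd) /= logn_n -pfactor_dvdn //; last exact: dvdn_gt0 npos hd.
Qed.

Lemma divp d i : (d %| n)%N -> ~~ (p i ^ m i %| d)%N -> (d %| n %/ p i)%N.
Proof.
move=> /dvdnP [c hc] hnd; case: (boolP (p i %| c)%N) => [/dvdnP [c' hc']|hpc].
  by rewrite hc hc' mulnAC mulnK ?prime_gt0 // dvdn_mull.
have cop : coprime (p i ^ m i) c by apply: coprimeXl; rewrite prime_coprime.
by move: (pm_dvd i); rewrite hc Gauss_dvdr // (negbTE hnd).
Qed.

Lemma natZ_neq0 q : (0 < q)%N -> (q < n)%N -> (q%:R : 'Z_n) != 0.
Proof. by move=> h1 h2; rewrite Zp_eq0 valN // modn_small // -lt0n. Qed.

Lemma ess_M e : (e %| n)%N -> is_essential (M n e) = [forall i, ~~ (p i ^ m i %| e)%N].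
Proof.
move=> he; apply/idP/idP.
  case/andP=> _ /forallP hE; apply/forallP => i; apply/negP => hpe.
  pose q := (n %/ (p i ^ m i))%N.
  have hq : (q %| n)%N by exact: dvdn_div (pm_dvd i).
  have hpm : (1 < p i ^ m i)%N.
    apply: (leq_trans (prime_gt1 (hp i))); apply: dvdn_leq; first by rewrite expn_gt0 prime_gt0.
    exact: dvdn_exp.
  have qpos : (0 < q)%N by rewrite divn_gt0 ?expn_gt0 ?prime_gt0 // dvdn_leq // ?npos // pm_dvd.
  have qlt : (q < n)%N by apply: ltn_Pdiv => //; exact: npos.
  have hJ : is_ideal (M n q) && (M n q != [set 0]).
    rewrite ideal_M //=; apply/negP => /eqP h.
    have : (q%:R : 'Z_n) \in M n q by rewrite memM.
    by rewrite h in_set1 (negbTE (natZ_neq0 qpos qlt)).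
  have := hE (M n q); rewrite hJ /= => /negP; apply; apply/eqP/setP => x.
  rewrite inE !memM' in_set1; apply/idP/idP; last by move/eqP ->; rewrite !dvdn0.
  case/andP => h1 h2; suff : x \in M n n by rewrite M_n // in_set1.
  rewrite memM'.
  have cop : coprime (p i ^ m i) q.
    apply: coprimeXl; rewrite prime_coprime //; apply/negP => hpq.
    have : (p i ^ (m i).+1 %| n)%N.
      by rewrite -(divnK (pm_dvd i)) -/q expnS dvdn_mul.
    by rewrite pfactor_dvdn // ?npos // logn_n ltnn.
  by rewrite -[X in (X %| _)%N](divnK (pm_dvd i)) -/q mulnC Gauss_dvd // h2 (dvdn_trans hpe h1).
move=> /forallP hall; rewrite /is_essential ideal_M //=; apply/forallP => J.
apply/implyP => /andP [hJ hJ0].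
have eJ := ideal_gen hn1 hJ; set g := gen J in eJ.
have hg : (g %| n)%N by apply: gen_dvd_n.
have [i hi] : exists i, ~~ (p i ^ m i %| g)%N.
  apply/existsP; apply: contraT; rewrite negb_exists => /forallP h.
  have gn : g = n by apply: allpm_n => // i; move: (h i); rewrite negbK.
  by move: hJ0; rewrite eJ gn M_n // eqxx.
pose q := (n %/ p i)%N.
have qpos : (0 < q)%N by rewrite divn_gt0 ?prime_gt0 // dvdn_leq ?npos // p_dvd.
have qlt : (q < n)%N by apply: ltn_Pdiv; [exact: prime_gt1 | exact: npos].
apply/negP => /eqP h.
have : (q%:R : 'Z_n) \in M n e :&: J.
  rewrite inE eJ !memM // ?divp //; exact: gen_dvd_n.
by rewrite h in_set1 (negbTE (natZ_neq0 qpos qlt)).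
Qed.

Definition gv (v : EVert n) : nat := gen (val v).
Definition tauv (v : EVert n) : {set 'I_k} := [set i | (p i ^ m i %| gv v)%N].

Lemma v_ideal (v : EVert n) : is_ideal (val v).
Proof. by case/and3P: (valP v). Qed.

Lemma v_M (v : EVert n) : val v = M n (gv v).
Proof. by rewrite /gv; apply: ideal_gen => //; exact: v_ideal. Qed.

Lemma gv_dvd (v : EVert n) : (gv v %| n)%N.
Proof. exact: gen_dvd_n. Qed.

Lemma tauvT v : tauv v != setT.
Proof.
apply/negP => /eqP hT.
have gn : gv v = n.
  apply: allpm_n; first exact: gv_dvd.
  move=> i; have : i \in tauv v by rewrite hT inE.
  by rewrite inE.
case/and3P: (valP v) => _ /negP h _; apply: h.
by rewrite v_M gn M_n.
Qed.

Lemma adj_eq (v w : EVert n) : essential_adj v w = (v != w) && (tauv v :&: tauv w == set0).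
Proof.
rewrite /essential_adj; congr (_ && _).
rewrite (v_M v) (v_M w) sum_M ?gv_dvd // ess_M; last first.
  exact: dvdn_trans (dvdn_gcdl _ _) (gv_dvd v).
apply/forallP/eqP => h.
  apply/setP => i; rewrite !inE; move: (h i); rewrite dvdn_gcd.
  by move/negbTE ->.
move=> i; have : i \notin tauv v :&: tauv w by rewrite h in_set0.
by rewrite !inE dvdn_gcd.
Qed.

Let B := (\max_(i < k) m i)%N.

Lemma m_le_B i : (m i <= B)%N.
Proof. exact: leq_bigmax. Qed.

Definition rho (v : EVert n) : {ffun 'I_k -> 'I_B.+1} :=
  [ffun i => inord (logn (p i) (gv v))].

Lemma gv_pos v : (0 < gv v)%N.
Proof. exact: dvdn_gt0 npos (gv_dvd v). Qed.

Lemma logn_gv_le v i : (logn (p i) (gv v) <= m i)%N.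
Proof. by rewrite -(logn_n i); apply: dvdn_leq_log npos (gv_dvd v). Qed.

Lemma rho_val v i : (rho v i : nat) = logn (p i) (gv v).
Proof. by rewrite ffunE inordK // ltnS (leq_trans (logn_gv_le v i) (m_le_B i)). Qed.

Lemma rho_inj : injective rho.
Proof.
move=> v w e; apply: val_inj; rewrite (v_M v) (v_M w); congr (M n _).
apply: eq_div_log; [exact: gv_dvd|exact: gv_dvd|] => j.
by rewrite -!rho_val e.
Qed.

Definition Fam (S : GVert k) : {set {ffun 'I_k -> 'I_B.+1}} :=
  [set r : {ffun 'I_k -> 'I_B.+1} | [forall i, if i \in val S then (r i : nat) == m i else ((r i : nat) < m i)%N]].

Lemma fiber_img (S : GVert k) : rho @: [set v | tauv v == val S] = Fam S.
Proof.
apply/setP => r; apply/imsetP/idP.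
  case=> v; rewrite inE => /eqP hv ->; rewrite inE; apply/forallP => i.
  rewrite rho_val -hv inE pfactor_dvdn ?gv_pos //.
  have := logn_gv_le v i; case: ifP => h le; first by rewrite eqn_leq le h.
  by rewrite ltnNge h.
rewrite inE => /forallP hr.
have rle i : (r i <= m i)%N by move: (hr i); case: ifP => _; [move/eqP ->|move/ltnW].
pose d := (\prod_(i < k) p i ^ r i)%N.
have hd : (d %| n)%N.
  rewrite hn; apply: (big_ind2 (fun a b => a %| b)%N) => //.
    by move=> a1 b1 a2 b2 h1 h2; apply: dvdn_mul.
  by move=> i _; apply: dvdn_exp2l.
have dpos : (0 < d)%N by apply: dvdn_gt0 npos hd.
have [i0 hi0] : exists i0, i0 \in val S.
  by apply/set0Pn; case/andP: (valP S).
have [i1 hi1] : exists i1, i1 \notin val S.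
  apply/existsP; apply: contraT; rewrite negb_exists => /forallP h.
  case/andP: (valP S) => _ /eqP hne; exfalso; apply: hne; apply/setP => i; rewrite inE.
  by move: (h i); rewrite negbK.
have dn : d != n.
  apply/negP => /eqP e; have := logn_pj i1 (fun i => val (r i)); rewrite -/d e logn_n.
  by move: (hr i1); rewrite (negbTE hi1) => h e'; move: h; rewrite -e' ltnn.
have d1 : d != 1%N.
  apply/negP => /eqP e; have := logn_pj i0 (fun i => val (r i)); rewrite -/d e logn1.
  move: (hr i0); rewrite hi0 => /eqP hri0 e'; move: (hm i0); by rewrite -hri0 -e'.
have dlt : (d < n)%N by rewrite ltn_neqAle dn dvdn_leq // npos.
have hv : [&& is_ideal (M n d), M n d != [set 0] & M n d != [set: 'Z_n]].
  rewrite ideal_M //=; apply/andP; split.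
    apply/negP => /eqP h; have : (d%:R : 'Z_n) \in M n d by rewrite memM.
    by rewrite h in_set1 (negbTE (natZ_neq0 dpos dlt)).
  apply/negP => /eqP h; have : (1 : 'Z_n) \in M n d by rewrite h inE.
  by rewrite -[1]/(1%:R) memM // dvdn1 (negbTE d1).
pose v : EVert n := exist _ (M n d) hv.
have gvd : gv v = d.
  apply: (M_inj hn1 (gv_dvd v) hd); by rewrite -v_M.
exists v.
  rewrite inE; apply/eqP/setP => i; rewrite inE gvd pfactor_dvdn // logn_pj.
  move: (hr i); case: ifP => h; first by move/eqP ->; rewrite leqnn.
  by rewrite ltnNge => /negbTE.
by apply/ffunP => i; rewrite ffunE gvd logn_pj inord_val.
Qed.

Lemma card_Fam (S : GVert k) : #|Fam S| = nG m S.
Proof.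
pose F := fun i => if i \in val S then [pred x : 'I_B.+1 | (x : nat) == m i]
                   else [pred x : 'I_B.+1 | ((x : nat) < m i)%N].
have -> : #|Fam S| = #|(family F : simpl_pred {ffun 'I_k -> 'I_B.+1})|.
  apply: eq_card => r; rewrite inE; apply/forallP/familyP => h i; move: (h i);
  by rewrite /F; case: ifP.
rewrite card_family foldr_prod big_enum /= /nG [RHS]big_mkcond /=.
apply: eq_bigr => i _; rewrite /F inE; case: ifP => _ /=.
  by rewrite card_eqord // ltnS m_le_B.
by rewrite card_ltord // (leq_trans (m_le_B i)).
Qed.

Lemma hfib (S : GVert k) : #|[set v | tauv v == val S]| = nG m S.
Proof. by rewrite -card_Fam -fiber_img card_imset //; exact: rho_inj. Qed.

End Main.

Lemma lap_ext (V : finType) (a1 a2 : rel V) : a1 =2 a2 -> laplacian_mx a1 = laplacian_mx a2.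
Proof.
move=> h; apply/matrixP => i j; rewrite !mxE /=.
have -> : [set z | a1 (enum_val i) z] = [set z | a2 (enum_val i) z].
  by apply/setP => z; rewrite !inE h.
by rewrite h.
Qed.


Theorem mainTheorem12 (k : nat) (p m : 'I_k -> nat) (n : nat) :
  (forall i, prime (p i)) ->
  (forall i j : 'I_k, (i < j)%N -> (p i < p j)%N) ->
  (forall i, (0 < m i)%N) ->
  n = (\prod_(i < k) p i ^ m i)%N ->
  (1 < n)%N -> ~~ prime n ->
  (laplacian_integral (@essential_adj n) <->
   forall a : algC, eigenvalue (LG_mx m) a -> a \in Num.int).
Proof.
move=> hp hmono hm hn hn1 _.
have pinj : injective p.
  move=> i j e; apply/eqP; case: (ltngtP i j) => [h|h|h]; last by apply/eqP/val_inj.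
    by move: (hmono _ _ h); rewrite e ltnn.
  by move: (hmono _ _ h); rewrite e ltnn.
have eL : laplacian_mx (@essential_adj n) = laplacian_mx (adjV (tauv p m (n:=n))).
  by apply: lap_ext => v w; rewrite (adj_eq hp pinj hm hn hn1).
rewrite /laplacian_integral eL.
exact: (spectral (tauvT hp pinj hn hn1) (hfib hp pinj hm hn hn1) hm).
Qed.
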